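(* Let $1\le k<\infty$, and let $T=S_k+F$ on the Hardy space $H^2(\mathbb{D})$, where $S_kz^n=z^{n+k}$ ($n\ge0$) and $F$ is defined by $F(1)=\alpha_0+\alpha_1z+\cdots+\alpha_{k-1}z^{k-1}+(\alpha_k-1)z^k$ and $F(z^n)=0$ for $n\ge1$, with $\alpha_0,\dots,\alpha_k\in\mathbb{C}$ and $0<|\alpha_0|\le1$. Then $T$ is analytic if and only if $\alpha_j\neq0$ for some $1\le j\le k$.
   Context: $H^2(\mathbb{D})$ is the Hardy space with orthonormal basis $\{z^n\}_{n\ge0}$. An operator $T$ on a Hilbert space $\mathcal{H}$ is analytic if $\bigcap_{m\ge1}T^m\mathcal{H}=\{0\}$. *)

(* Defs.v *)
From mathcomp Require Import all_boot all_order all_algebra.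
From mathcomp Require Import reals.
From mathcomp Require Export complex.
Set Implicit Arguments. Unset Strict Implicit. Unset Printing Implicit Defensive.
Import Order.TTheory GRing.Theory Num.Theory.
Local Open Scope ring_scope.

(* H^2(D) is identified with l^2(N) via Taylor coefficients:
   f = sum_n u n z^n  <->  u : nat -> R[i] with sum_n |u n|^2 < oo. *)
Definition hardy (R : realType) (u : nat -> R[i]) : Prop :=
  exists M : R[i], forall N : nat, \sum_(n < N) `|u n| ^+ 2 <= M.

Definition Fcoef (R : realType) (k : nat) (alpha : nat -> R[i]) (n : nat) : R[i] :=
  if (n < k)%N then alpha n else if n == k then alpha k - 1 else 0.

Definition Sk (R : realType) (k : nat) (u : nat -> R[i]) (n : nat) : R[i] :=
  if (k <= n)%N then u (n - k)%N else 0.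

(* F z^0 = F(1), F z^n = 0 for n >= 1; so F u = u 0 * F(1) *)
Definition Fop (R : realType) (k : nat) (alpha : nat -> R[i]) (u : nat -> R[i])
  (n : nat) : R[i] := u 0%N * Fcoef k alpha n.

Definition Top (R : realType) (k : nat) (alpha : nat -> R[i]) (u : nat -> R[i])
  (n : nat) : R[i] := Sk k u n + Fop k alpha u n.

Definition analytic (R : realType) (T : (nat -> R[i]) -> (nat -> R[i])) : Prop :=
  forall v : nat -> R[i], hardy v ->
    (forall m : nat, (1 <= m)%N ->
       exists u : nat -> R[i], hardy u /\ forall n, v n = iter m T u n) ->
    forall n, v n = 0.

(* Main.v *)
Require Import Defs.
From mathcomp Require Import all_boot all_order all_algebra.
From mathcomp Require Import reals complex.
From Stdlib Require Import FunctionalExtensionality.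
From mathcomp Require Import ring zify.
Import Order.TTheory GRing.Theory Num.Theory.
Local Open Scope ring_scope.

Section S.
Variables (R : realType) (k : nat) (alpha : nat -> R[i]).
Hypothesis k1 : (1 <= k)%N.

Lemma Top0 u : Top k alpha u 0 = u 0%N * alpha 0%N.
Proof.
rewrite /Top /Sk /Fop /Fcoef.
have -> : (k <= 0)%N = false by case: k k1.
by rewrite add0r k1.
Qed.

Lemma Toplow u j : (1 <= j)%N -> (j <= k)%N -> Top k alpha u j = u 0%N * alpha j.
Proof.
move=> j1 jk; rewrite /Top /Sk /Fop /Fcoef.
move: jk; rewrite leq_eqVlt => /orP[/eqP->|jlt]; last first.
  by rewrite leqNgt jlt add0r.
by rewrite leqnn subnn ltnn eqxx mulrBr mulr1 addrC subrK.
Qed.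

Lemma Tophigh u n : (k < n)%N -> Top k alpha u n = u (n - k)%N.
Proof.
move=> kn; rewrite /Top /Sk /Fop /Fcoef (ltnW kn) ltnNge (ltnW kn) /=.
by rewrite gtn_eqF // mulr0 addr0.
Qed.

Lemma Top_inj a b : alpha 0%N != 0 -> Top k alpha a = Top k alpha b -> a = b.
Proof.
move=> a0 E.
have e0 : a 0%N = b 0%N.
  have := congr1 (fun f => f 0%N) E; rewrite !Top0 => /eqP.
  by rewrite (inj_eq (mulIf a0)) => /eqP.
apply: functional_extensionality => n.
case: n => [//|n].
have := congr1 (fun f => f (n.+1 + k)%N) E.
by rewrite !Tophigh ?addnK // addSn ltnS leq_addl.
Qed.

Definition P (v : nat -> R[i]) :=
  forall m, (1 <= m)%N -> exists u, v = iter m (Top k alpha) u.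

Lemma Pstep v : alpha 0%N != 0 -> P v -> exists u, v = Top k alpha u /\ P u.
Proof.
move=> a0 Pv; have [u1 E1] := Pv 1%N isT.
exists u1; split => // m m1.
have [u' E'] := Pv m.+1 isT.
exists u'; apply: (Top_inj _ _ a0); by rewrite -[Top k alpha u1]/(iter 1 (Top k alpha) u1) -E1 E'.
Qed.

Lemma Pform v : alpha 0%N != 0 -> P v -> forall m j, (1 <= j)%N -> (j <= k)%N ->
  v (m * k + j)%N = v 0%N * alpha j * (alpha 0%N)^-1 ^+ m.+1.
Proof.
move=> a0 + m; elim: m v => [|m IH] v Pv j j1 jk;
  have [u [-> Pu]] := Pstep _ a0 Pv.
  by rewrite mul0n add0n Toplow // Top0 expr1; field.
rewrite Tophigh; last by rewrite mulSn -addnA -[X in (X < _)%N]addn0 ltn_add2l ltn_addl.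
rewrite mulSn -addnA addKn IH // Top0 exprS.
by rewrite !exprS; field.
Qed.


Definition e (c : R[i]) (n : nat) : R[i] := if n == 0%N then c else 0.

Lemma hardy_e c : hardy (e c).
Proof.
exists (`|c| ^+ 2) => N; case: N => [|N].
  by rewrite big_ord0 exprn_ge0.
rewrite big_ord_recl big1 ?addr0 // => i _; by rewrite /e /= normr0 expr0n.
Qed.

Lemma Te c : (forall j, (1 <= j)%N -> (j <= k)%N -> alpha j = 0) ->
  Top k alpha (e c) = e (c * alpha 0%N).
Proof.
move=> H; apply: functional_extensionality => n.
case: n => [|n]; first by rewrite Top0.
case: (leqP n.+1 k) => hn.
  by rewrite Toplow // H // mulr0.
by rewrite Tophigh // /e subn_eq0 leqNgt hn.
Qed.

Lemma iter_e c m : (forall j, (1 <= j)%N -> (j <= k)%N -> alpha j = 0) ->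
  iter m (Top k alpha) (e c) = e (c * alpha 0%N ^+ m).
Proof.
move=> H; elim: m => [|m IH]; first by rewrite expr0 mulr1.
rewrite iterS IH Te // exprS.
by congr e; ring.
Qed.

Lemma sum_single (f : nat -> R[i]) a b x : (forall i, 0 <= f i) ->
  (a <= x)%N -> (x < b)%N -> f x <= \sum_(a <= i < b) f i.
Proof.
move=> f0 ax xb.
rewrite (@big_cat_nat _ _ _ x) ?(ltnW xb) //= [X in _ + X]big_ltn //.
by rewrite addrCA lerDl addr_ge0 // sumr_ge0.
Qed.
End S.
Arguments e {R}.
Arguments hardy_e {R}.
Arguments Pform {R k alpha} k1 {v}.
Arguments P {R}.

Theorem corollary4p5 (R : realType) (k : nat) (alpha : nat -> R[i]) :
  (1 <= k)%N ->
  0 < `|alpha 0%N| <= 1 ->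
  (analytic (Top k alpha) <->
   exists j : nat, [/\ (1 <= j)%N, (j <= k)%N & alpha j != 0]).
Proof.
move=> k1 /andP[a0pos a0le1].
have a0 : alpha 0%N != 0 by rewrite -normr_gt0.
split.
  move=> An.
  case: (boolP [exists j : 'I_k.+1, (1 <= j)%N && (alpha j != 0)]).
    move/existsP=> [j /andP[j1 aj]]; exists j; split=> //.
    by rewrite -ltnS ltn_ord.
  move/existsPn=> H.
  have H0 : forall j, (1 <= j)%N -> (j <= k)%N -> alpha j = 0.
    move=> j j1 jk; have := H (Ordinal (jk : (j < k.+1)%N)).
    by rewrite /= j1 /= negbK => /eqP.
  have Hr : forall m, (1 <= m)%N -> exists u, hardy u /\ forall n, e 1 n = iter m (Top k alpha) u n.
    move=> m _; exists (e (alpha 0%N ^- m)); split; first exact: hardy_e.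
    by move=> n; rewrite iter_e // mulVf // expf_neq0.
  have := An (e 1) (hardy_e 1) Hr 0%N.
  by rewrite /e eqxx => /eqP; rewrite oner_eq0.
move=> [j [j1 jk aj]] v hv Hv.
have Pv : P k alpha v.
  move=> m m1; have [u [_ hu]] := Hv m m1; exists u.
  exact: functional_extensionality.
have F := Pform k1 a0 Pv.
suff v00 : v 0%N = 0.
  case=> [//|n].
  have -> : n.+1 = ((n %/ k) * k + (n %% k).+1)%N by rewrite addnS -divn_eq.
  by rewrite F // ?v00 ?mul0r // ltn_mod.
apply/eqP; apply: contraT => v0.
pose c := `|v 0%N * alpha j| ^+ 2.
have c0 : 0 < c by rewrite /c exprn_gt0 // normr_gt0 mulf_neq0.
have fge : forall N, c <= `|v (N * k + j)%N| ^+ 2.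
  move=> N; rewrite F // normrM exprMn.
  rewrite -[X in X <= _]mulr1 /c ler_wpM2l ?exprn_ge0 //.
  rewrite normrX -exprM exprn_ege1 // normfV invf_ge1 //.
have lb : forall N, N%:R * c <= \sum_(0 <= n < N * k + 1) `|v n| ^+ 2.
  elim=> [|N IH]; first by rewrite mul0r sumr_ge0 // => n _; rewrite exprn_ge0.
  rewrite (@big_cat_nat _ _ _ (N * k + 1)); last 2 first.
  - by [].
  - by rewrite leq_add2r leq_mul2r leqnSn orbT.
  rewrite /= mulrSr mulrDl mul1r lerD //.
  apply: le_trans (fge N) _; apply: (@sum_single R (fun i => `|v i| ^+ 2)) => //.
  - by move=> i; rewrite exprn_ge0.
  - by rewrite leq_add2l.
  - rewrite mulSn; nia.
have [M hM] := hv.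
have bnd : forall N, N%:R <= M / c.
  by move=> N; rewrite ler_pdivlMr // (le_trans (lb N)) // big_mkord hM.
have x0 : 0 <= M / c by exact: (bnd 0%N).
have xr : M / c \is Num.real by exact: ger0_real.
have := RRe_real xr; set r := complex.Re (M / c) => hr.
have r0 : 0 <= r by rewrite -(@lecR R) hr.
have := bnd (Num.bound r); rewrite -hr -(rmorph_nat (real_complex R)) lecR.
by rewrite leNgt archi_boundP.
Qed.
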